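(* Let $B$ be a Banach ring. For any family $\mu=(\mu_b)_{b\in\mathcal{M}(B)}\in\mathcal{F}_B$, set $L_\mu(\varphi)(b)=\int\varphi|_{\pi^{-1}(b)}\,d\mu_b$ for $\varphi\in\mathcal{C}^0(\mathbb{P}^{1,an}_B)$ and $b\in\mathcal{M}(B)$. Then $L_\mu$ is a continuous family of positive measures on $\mathbb{P}^{1,an}_B$, and the map $\mu\mapsto L_\mu$ is a bijection between $\mathcal{F}_B$ and the set $\mathrm{M}^+(\mathbb{P}^1,B)$ of continuous families of positive measures on $\mathbb{P}^{1,an}_B$.
   Context: $B$ is a commutative Banach ring with unit; $\mathcal{M}(B)$ is its Berkovich spectrum (bounded multiplicative seminorms on $B$, a compact space). $\mathbb{P}^{1,an}_B$ is the Berkovich projective line over $B$ (compact), with canonical continuous projection $\pi\colon\mathbb{P}^{1,an}_B\to\mathcal{M}(B)$ (restriction of seminorms to $B$), whose fiber $\pi^{-1}(b)$ is identified with $\mathbb{P}^{1,an}_{\mathscr{H}(b)}$. A continuous family of positive measures on $\mathbb{P}^{1,an}_B$ is a linear map $L\colon\mathcal{C}^0(\mathbb{P}^{1,an}_B)\to\mathcal{C}^0(\mathcal{M}(B))$ (real-valued continuous functions) sending nonnegative functions to nonnegative functions and such that $L(\varphi\circ\pi)=\varphi\times L(1)$ for all $\varphi\in\mathcal{C}^0(\mathcal{M}(B))$. $\mathcal{F}_B$ is the set of families $(\mu_b)_{b\in\mathcal{M}(B)}$ of positive Radon measures on $\mathbb{P}^{1,an}_B$ with $\mu_b$ supported on $\pi^{-1}(b)$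 and $b\mapsto\mu_b$ continuous for the weak-$*$ topology. *)

(* Defs.v *)
From HB Require Import structures.
From mathcomp Require Import all_boot all_order all_algebra.
From mathcomp Require Import all_classical all_reals all_analysis.
Set Implicit Arguments. Unset Strict Implicit. Unset Printing Implicit Defensive.
Import Order.TTheory GRing.Theory Num.Theory.
Import numFieldNormedType.Exports.
Local Open Scope classical_set_scope.
Local Open Scope ring_scope.

Section Berk.
Context {R : realType}.

Definition ring_norm {B : comNzRingType} (nrm : B -> R) : Prop :=
  [/\ nrm 0 = 0, nrm 1 = 1,
      (forall a b, nrm (a - b) <= nrm a + nrm b),
      (forall a b, nrm (a * b) <= nrm a * nrm b) &
      (forall a, nrm a = 0 -> a = 0)].

Definition norm_complete {B : comNzRingType} (nrm : B -> R) : Prop :=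
  forall u : nat -> B,
    (forall e : R, 0 < e -> exists N : nat, forall m n : nat,
        (N <= m)%N -> (N <= n)%N -> nrm (u m - u n) < e) ->
    exists l : B, forall e : R, 0 < e -> exists N : nat, forall n : nat,
        (N <= n)%N -> nrm (u n - l) < e.

Definition banach_ring {B : comNzRingType} (nrm : B -> R) : Prop :=
  ring_norm nrm /\ norm_complete nrm.

Definition mult_seminorm {A : nzRingType} (x : A -> R) : Prop :=
  [/\ x 0 = 0, x 1 = 1,
      (forall a b, x (a - b) <= x a + x b) &
      (forall a b, x (a * b) = x a * x b)].

Context {B : comNzRingType} (nrm : B -> R).

Definition MBset : set {ptws B -> R} :=
  [set x | mult_seminorm x /\ forall a, x a <= nrm a].
Definition MB := set_type MBset.

Definition A1set : set {ptws {poly B} -> R} :=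
  [set x | mult_seminorm x /\ forall a, x a%:P <= nrm a].
Definition A1 := set_type A1set.

(** the polynomial S^n P(1/S) *)
Definition revn (n : nat) (P : {poly B}) : {poly B} := \poly_(i < n.+1) P`_(n - i).

(** x (chart with coordinate T) and y (chart with coordinate S = 1/T)
    represent the same point of the gluing *)
Definition glue (x y : A1) : Prop :=
  forall (P : {poly B}) (n : nat), (size P <= n.+1)%N ->
    val y (revn n P) = val x P * val y 'X ^+ n.

Lemma revnK n (Q : {poly B}) : (size Q <= n.+1)%N -> revn n (revn n Q) = Q.
Proof.
move=> hQ; apply/polyP => k; rewrite !coef_poly; case: ltnP => hk.
  by rewrite (leq_ltn_trans (leq_subr k n) (ltnSn n)) subKn.
by rewrite nth_default // (leq_trans hQ hk).
Qed.

Lemma revn1X : revn 1 'X = 1.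
Proof.
apply/polyP => k; rewrite coef_poly coef1 /=.
by case: k => [|[|k]] //=; rewrite coefX.
Qed.

Lemma A1_ms (x : A1) : mult_seminorm (val x).
Proof. by have /set_mem [] := valP x. Qed.

Lemma glue_X x y : glue x y -> val x 'X * val y 'X = 1.
Proof.
move=> H; have := H 'X 1%N; rewrite size_polyX revn1X => /(_ isT) /esym.
by rewrite expr1; case: (A1_ms y) => _ -> _ _.
Qed.

Lemma glue_uniq_l x x' y : glue x y -> glue x' y -> x = x'.
Proof.
move=> H H'; have yX0 : val y 'X != 0.
  by apply/eqP => h; move: (glue_X H); rewrite h mulr0 => /eqP; rewrite eq_sym oner_eq0.
apply: val_inj; apply: funext => P.
have hP : (size P <= ((size P).-1).+1)%N by rewrite leqSpred.
by have := H P _ hP; rewrite (H' P _ hP) => /(mulIf (expf_neq0 _ yX0)).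
Qed.

Lemma glue_uniq_r x y y' : glue x y -> glue x y' -> y = y'.
Proof.
move=> H H'; have hX : val y 'X = val y' 'X.
  have h1 := glue_X H; have h2 := glue_X H'.
  have xX0 : val x 'X != 0.
    by apply/eqP => h; move: h1; rewrite h mul0r => /eqP; rewrite eq_sym oner_eq0.
  by apply: (mulfI xX0); rewrite h1 h2.
apply: val_inj; apply: funext => Q.
set n := (size Q).-1.
have hQ : (size Q <= n.+1)%N by rewrite leqSpred.
have hP : (size (revn n Q) <= n.+1)%N by exact: size_poly.
by rewrite -(revnK hQ) (H _ _ hP) (H' _ _ hP) hX.
Qed.

Definition A1fam : bool -> topologicalType := fun _ => A1.
(** disjoint union of the two charts: [true] = coordinate T, [false] = S *)
Definition Charts := {i : bool & A1fam i}.

Definition glue_rel (u v : Charts) : Prop :=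
  match u, v with
  | existT i x, existT j y =>
      if i == j then x = y else if i then glue x y else glue y x
  end.

Definition glue_relb : rel Charts := fun u v => `[< glue_rel u v >].

Lemma glue_relb_refl : reflexive glue_relb.
Proof. by move=> [[] x]; apply/asboolP. Qed.

Lemma glue_relb_sym : symmetric glue_relb.
Proof.
by move=> [[] x] [[] y]; apply/asboolP/asboolP => //= h; subst.
Qed.

Lemma glue_relb_trans : transitive glue_relb.
Proof.
move=> [[] y] [[] x] [[] z] /asboolP /= h1 /asboolP /= h2; apply/asboolP => /=.
all: try by subst.
- exact: (glue_uniq_r h1 h2).
- exact: (glue_uniq_l h1 h2).
Qed.

Canonical glue_equiv := EquivRel glue_relb glue_relb_refl glue_relb_sym glue_relb_trans.

Definition P1 : topologicalType := quotient_topology {eq_quot glue_relb}%qT.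


Lemma restr_mem (x : A1) : ((fun c : B => val x c%:P) : {ptws B -> R}) \in MBset.
Proof.
apply/mem_set; have /set_mem [[h0 h1 hB hM] hb] := valP x; split=> //; split.
- by rewrite polyC0.
- by rewrite polyC1.
- by move=> a b; rewrite polyCB.
- by move=> a b; rewrite polyCM.
Qed.

Definition restr (x : A1) : MB := @exist _ (fun f => f \in MBset) _ (restr_mem x).

Definition proj1 (p : P1) : MB := restr (projT2 (repr p)).

Definition fiber (b : MB) : set P1 := proj1 @^-1` [set b].

End Berk.

Definition C0 (R : realType) (X : topologicalType) := {f : X -> R | continuous f}.

Section Radon.
Context {R : realType}.


(** positive Radon measures on a compact space X, in Bourbaki's sense:
    positive linear forms on C0(X) *)
Definition positive_radon {X : topologicalType} (m : C0 R X -> R) : Prop :=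
  (forall (a : R) (f g h : C0 R X),
      (forall x, sval h x = a * sval f x + sval g x) -> m h = a * m f + m g) /\
  (forall f : C0 R X, (forall x, 0 <= sval f x) -> 0 <= m f).

(** the support of m is contained in the (closed) set F: m vanishes on
    every continuous function whose support does not meet F *)
Definition supported_on {X : topologicalType} (m : C0 R X -> R) (F : set X) : Prop :=
  forall f : C0 R X, closure [set x | sval f x != 0] `&` F = set0 -> m f = 0.
End Radon.

Section Families.
Context {R : realType} {B : comNzRingType} (nrm : B -> R).

Definition FB (mu : MB nrm -> C0 R (P1 nrm) -> R) : Prop :=
  (forall b, positive_radon (mu b) /\ supported_on (mu b) (fiber b)) /\
  (forall phi : C0 R (P1 nrm), continuous (fun b => mu b phi)).

(** L_mu(phi)(b) = integral of phi|_{pi^{-1}(b)} against mu_b *)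
Definition Lmu (mu : MB nrm -> C0 R (P1 nrm) -> R) : C0 R (P1 nrm) -> MB nrm -> R :=
  fun phi b => mu b phi.

(** M^+(P^1, B): continuous families of positive measures, i.e. linear maps
    L : C0(P^1_B) -> C0(M(B)), positive, with L(phi o pi) = phi * L(1) *)
Definition Mplus (L : C0 R (P1 nrm) -> MB nrm -> R) : Prop :=
  [/\ (forall phi, continuous (L phi)),
      (forall (a : R) (f g h : C0 R (P1 nrm)),
         (forall x, sval h x = a * sval f x + sval g x) ->
         L h = (fun b => a * L f b + L g b)),
      (forall f : C0 R (P1 nrm), (forall x, 0 <= sval f x) -> forall b, 0 <= L f b) &
      (forall (psi : C0 R (MB nrm)) (h one : C0 R (P1 nrm)),
         (forall p, sval h p = sval psi (proj1 p)) -> (forall p, sval one p = 1) ->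
         L h = (fun b => sval psi b * L one b))].
End Families.

(* Main.v *)
Require Import Defs.
From HB Require Import structures.
From mathcomp Require Import all_boot all_order all_algebra.
From mathcomp Require Import all_classical all_reals all_analysis.
From mathcomp Require Import zify ring lra.
Import Order.TTheory GRing.Theory Num.Theory.
Import numFieldNormedType.Exports.
Local Open Scope classical_set_scope.
Local Open Scope ring_scope.
Set Implicit Arguments. Unset Strict Implicit. Unset Printing Implicit Defensive.
Section SN.
Context {R : realType} {A : nzRingType} (x : A -> R) (hx : mult_seminorm x).

Lemma ms_ge0 a : 0 <= x a.
Proof.
case: hx => h0 _ hs _; have := hs a a; rewrite subrr h0 => h.
by rewrite -(@pmulr_rge0 _ 2) // mulr2n mulrDl !mul1r.
Qed.

Lemma ms_N1 : x (-1) = 1.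
Proof.
case: hx => _ h1 _ hm; have := hm (-1) (-1); rewrite mulrNN mulr1 h1 => /esym/eqP.
rewrite -expr2 sqrf_eq1 => /orP[/eqP//|/eqP h].
by have := ms_ge0 (-1); rewrite h; lra.
Qed.

Lemma ms_N a : x (- a) = x a.
Proof. by case: hx => _ _ _ hm; rewrite -mulN1r hm ms_N1 mul1r. Qed.

Lemma ms_D a b : x (a + b) <= x a + x b.
Proof. by case: hx => _ _ hs _; have := hs a (- b); rewrite opprK ms_N. Qed.

Lemma ms_X a n : x (a ^+ n) = x a ^+ n.
Proof.
case: hx => _ h1 _ hm; elim: n => [|n IH]; first by rewrite !expr0.
by rewrite !exprS hm IH.
Qed.

Lemma ms_sum (I : Type) (r : seq I) (F : I -> A) :
  x (\sum_(i <- r) F i) <= \sum_(i <- r) x (F i).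
Proof.
elim: r => [|i r IH]; first by rewrite !big_nil; case: hx => -> _ _ _.
rewrite !big_cons; apply: le_trans (ms_D _ _) _; exact: lerD.
Qed.
End SN.

Section Rev.
Context {B : comNzRingType}.
Implicit Types P Q : {poly B}.

Lemma coef_revn n P i : (revn n P)`_i = if (i < n.+1)%N then P`_(n - i) else 0.
Proof. by rewrite coef_poly. Qed.

Lemma revnD n P Q : revn n (P + Q) = revn n P + revn n Q.
Proof. by apply/polyP => i; rewrite coefD !coef_revn; case: ifP => _; rewrite ?coefD ?addr0. Qed.

Lemma revnB n P Q : revn n (P - Q) = revn n P - revn n Q.
Proof. by apply/polyP => i; rewrite coefB !coef_revn; case: ifP => _; rewrite ?coefB ?subr0. Qed.

Lemma revn0 n : revn n (0 : {poly B}) = 0.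
Proof. by apply/polyP => i; rewrite coef_revn coef0; case: ifP => _; rewrite ?coef0. Qed.

Lemma revn_sum n (I : Type) (r : seq I) (F : I -> {poly B}) :
  revn n (\sum_(i <- r) F i) = \sum_(i <- r) revn n (F i).
Proof. exact: (big_morph _ (revnD n) (revn0 n)). Qed.

Lemma revn_ZXn n (c : B) k : (k <= n)%N -> revn n (c *: 'X^k) = c *: 'X^(n - k).
Proof.
move=> hk; apply/polyP => i; rewrite coef_revn !coefZ !coefXn.
case: ifP => hi.
  by congr (_ * _); congr (_%:R); apply/eqP/eqP; lia.
by rewrite (_ : (i == n - k)%N = false) ?mulr0 //; apply/eqP; lia.
Qed.

Lemma poly_expand n P : (size P <= n.+1)%N ->
  P = \sum_(i < n.+1) P`_i *: 'X^i.
Proof.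
move=> hP; rewrite -poly_def; apply/polyP => i; rewrite coef_poly.
by case: ifP => // hi; rewrite nth_default //; apply: leq_trans hP _; lia.
Qed.

Lemma revn_expand n P : (size P <= n.+1)%N ->
  revn n P = \sum_(i < n.+1) P`_i *: 'X^(n - i).
Proof.
move=> hP; rewrite {1}(poly_expand hP) revn_sum; apply: eq_bigr => i _.
by rewrite revn_ZXn // -ltnS.
Qed.

Lemma revnM n1 n2 P Q : (size P <= n1.+1)%N -> (size Q <= n2.+1)%N ->
  revn (n1 + n2) (P * Q) = revn n1 P * revn n2 Q.
Proof.
move=> hP hQ.
rewrite (revn_expand hP) (revn_expand hQ).
rewrite {1}(poly_expand hP) {1}(poly_expand hQ).
rewrite big_distrl /= revn_sum big_distrl /=; apply: eq_bigr => i _.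
rewrite big_distrr /= revn_sum big_distrr /=; apply: eq_bigr => j _.
rewrite -scalerAl -scalerAr scalerA -exprD revn_ZXn; last first.
  by have := ltn_ord i; have := ltn_ord j; lia.
rewrite -scalerAl -scalerAr scalerA -exprD; congr (_ *: 'X^_).
by have := ltn_ord i; have := ltn_ord j; lia.
Qed.

Lemma revn1 n : revn n (1 : {poly B}) = 'X^n.
Proof.
by rewrite -(scale1r 1) -(expr0 'X) (revn_ZXn _ (leq0n n)) subn0 scale1r.
Qed.

Lemma revn_shift n k P : (size P <= k.+1)%N -> (k <= n)%N ->
  revn n P = 'X^(n - k) * revn k P.
Proof.
move=> hP hk; rewrite -(subnK hk) -{1}[P]mul1r revnM ?size_poly1 //.
by rewrite revn1 subnK.
Qed.

Lemma revnC0 (c : B) : revn 0 c%:P = c%:P.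
Proof.
by apply/polyP => i; rewrite coef_revn; case: i => [|i]; rewrite /= ?coefC.
Qed.

Lemma size_revn n P : (size (revn n P) <= n.+1)%N.
Proof. exact: size_poly. Qed.
End Rev.
Section Dual.
Context {R : realType} {B : comNzRingType} (nrm : B -> R).
Implicit Types (P Q : {poly B}).

Definition dualf (f : {poly B} -> R) : {ptws {poly B} -> R} :=
  fun Q => f (revn (size Q).-1 Q) / f 'X ^+ (size Q).-1.

Variable f : {poly B} -> R.
Hypothesis hf : mult_seminorm f.
Hypothesis hX : f 'X != 0.

Lemma dualE n Q : (size Q <= n.+1)%N -> dualf f Q = f (revn n Q) / f 'X ^+ n.
Proof.
move=> hQ; rewrite /dualf; set k := (size Q).-1.
have hk : (k <= n)%N by rewrite /k; lia.
have hQk : (size Q <= k.+1)%N by rewrite /k; lia.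
rewrite (revn_shift hQk hk); case: (hf) => _ _ _ hm; rewrite hm (ms_X hf).
rewrite -[in f 'X ^+ n](subnK hk) exprD; field.
by rewrite !expf_neq0.
Qed.

Lemma dual_A1 : (forall a, f a%:P <= nrm a) -> A1set nrm (dualf f).
Proof.
move=> hb; have [h0 h1 hs hm] := hf; split; first split.
- by rewrite /dualf size_poly0 /= revn0 h0 mul0r.
- by rewrite /dualf size_poly1 /= -polyC1 revnC0 polyC1 h1 expr0 divr1.
- move=> a b.
  rewrite (@dualE (maxn (size a) (size b)) (a - b)); last by apply: leq_trans (size_add _ _) _; rewrite size_polyN leqnSn.
  rewrite (@dualE (maxn (size a) (size b)) a); last by apply: leq_trans (leq_maxl _ _) (leqnSn _).
  rewrite (@dualE (maxn (size a) (size b)) b); last by apply: leq_trans (leq_maxr _ _) (leqnSn _).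
  rewrite revnB -mulrDl ler_wpM2r //; first by rewrite invr_ge0 exprn_ge0 // ms_ge0.
- move=> a b.
  rewrite (@dualE (size a + size b) (a * b)); last by apply: leq_trans (size_mul_leq _ _) (leq_trans (leq_pred _) (leqnSn _)).
  rewrite (@dualE (size a) a) ?leqnSn // (@dualE (size b) b) ?leqnSn //.
  by rewrite revnM ?leqnSn // hm exprD invfM mulrACA.
- move=> a; rewrite (@dualE 0) ?size_polyC ?leq_b1 //.
  by rewrite revnC0 expr0 divr1.
Qed.

Lemma dualX : dualf f 'X = (f 'X)^-1.
Proof.
rewrite (@dualE 1) ?size_polyX // revn1X expr1; case: hf => _ -> _ _.
by rewrite div1r.
Qed.
End Dual.

Section DualPt.
Context {R : realType} {B : comNzRingType} (nrm : B -> R).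
Variable z : A1 nrm.
Hypothesis hz : val z 'X != 0.

Lemma z_ms : mult_seminorm (val z).
Proof. exact: A1_ms. Qed.
Lemma z_b : forall a, val z a%:P <= nrm a.
Proof. by have /set_mem [] := valP z. Qed.

Definition dual_pt : A1 nrm :=
  @exist _ (fun g => g \in A1set nrm) _ (mem_set (dual_A1 z_ms hz z_b)).

Lemma dual_ptE : val dual_pt = dualf (val z).
Proof. by []. Qed.

Lemma glue_dual_r : Defs.glue z dual_pt.
Proof.
move=> P n hP; rewrite dual_ptE (dualE z_ms hz (size_revn _ _)) revnK //.
by rewrite (dualX z_ms hz) exprVn.
Qed.

Lemma glue_dual_l : Defs.glue dual_pt z.
Proof.
move=> P n hP; rewrite dual_ptE (dualE z_ms hz hP) divfK //.
by rewrite expf_neq0.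
Qed.

Lemma dual_X : val dual_pt 'X = (val z 'X)^-1.
Proof. by rewrite dual_ptE (dualX z_ms hz). Qed.
End DualPt.

Lemma cont_ptws {R : realType} {X : topologicalType} {I : Type} (h : X -> {ptws I -> R}) :
  (forall i, continuous (fun x => h x i)) -> continuous h.
Proof.
move=> hc x; apply/cvg_sup => i.
have : continuous (h : X -> initial_topology (@proj I (fun _ => R) i)).
  by apply: continuous_comp_initial; exact: hc.
exact.
Qed.

Section T.
Context {R : realType} {B : comNzRingType} (nrm : B -> R).

Lemma restr_cont : continuous (@restr R B nrm).
Proof.
apply: continuous_comp_initial; apply: cont_ptws => c /=.
have := @initial_continuous _ _ (@set_val _ (A1set nrm)).
move=> hv x.
have := @proj_continuous _ (fun _ : {poly B} => R) c%:P (set_val x).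
move=> /(continuous_comp (hv x)). exact.
Qed.

Lemma glue_restr (x y : A1 nrm) : Defs.glue x y -> restr x = restr y.
Proof.
move=> h; apply: val_inj; apply: funext => c /=.
have := h c%:P 0%N; rewrite size_polyC leq_b1 revnC0 expr0 mulr1 => ->//.
Qed.

Lemma restr_rel (u v : Charts nrm) : glue_relb u v -> restr (projT2 u) = restr (projT2 v).
Proof.
case: u => [[] x]; case: v => [[] y] /asboolP /=; rewrite /glue_rel /=.
- by move->.
- exact: glue_restr.
- by move/glue_restr ->.
- by move->.
Qed.

Lemma proj1_cont : continuous (@proj1 R B nrm).
Proof.
have -> : @proj1 R B nrm = (fun u : Charts nrm => restr (projT2 u)) \o repr by [].
apply: repr_comp_continuous.
  by move=> [i x]; exact (@restr_cont x).
move=> a b /eqP h.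
have : (a = b %[mod {eq_quot (@glue_relb R B nrm)}])%qT by exact h.
by move/eqmodP => /restr_rel ->.
Qed.

Lemma MB_hausdorff : hausdorff_space (MB nrm).
Proof.
move=> x y cl; apply: val_inj.
have hP : hausdorff_space {ptws B -> R}.
  by apply: hausdorff_product => _; exact: Rhausdorff.
apply: hP => U V hU hV.
have hv := @initial_continuous _ _ (@set_val _ (MBset nrm)).
have [z [hz1 hz2]] := cl _ _ (hv x U hU) (hv y V hV).
by exists (val z).
Qed.
End T.

Section CL.
Context {R : realType} {T : topologicalType}.
Lemma cl_le (g h : T -> R) : continuous g -> continuous h -> closed [set t | g t <= h t].
Proof.
move=> cg ch.
have -> : [set t | g t <= h t] = (fun t => h t - g t) @^-1` [set r | 0 <= r].
  by apply/seteqP; split => t /=; rewrite subr_ge0.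
apply: preimage_closed; last exact: closed_ge.
move=> t _; exact: (continuousD (ch t) (continuousN (cg t))).
Qed.

Lemma cl_eq (g h : T -> R) : continuous g -> continuous h -> closed [set t | g t = h t].
Proof.
move=> cg ch.
have -> : [set t | g t = h t] = [set t | g t <= h t] `&` [set t | h t <= g t].
  by apply/seteqP; split => t /=; [move->; rewrite lexx | case=> *; apply/eqP; rewrite eq_le; apply/andP].
by apply: closedI; apply: cl_le.
Qed.

Lemma cont_add (g h : T -> R) : continuous g -> continuous h -> continuous (fun t => g t + h t).
Proof. by move=> cg ch t; exact: (continuousD (cg t) (ch t)). Qed.
Lemma cont_mul (g h : T -> R) : continuous g -> continuous h -> continuous (fun t => g t * h t).
Proof. by move=> cg ch t; exact: (continuousM (cg t) (ch t)). Qed.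
Lemma cont_cst (c : R) : continuous (fun _ : T => c).
Proof. by move=> t; exact: cvg_cst. Qed.
End CL.

Section Comp.
Context {R : realType} {B : comNzRingType} (nrm : B -> R).
Local Notation PT := {ptws {poly B} -> R}.

Lemma cpr (P : {poly B}) : continuous (fun g : PT => g P).
Proof. exact: (@proj_continuous _ (fun _ : {poly B} => R) P). Qed.

Definition Dp := [set g : PT | A1set nrm g /\ g 'X <= 1].

Lemma Dp_closed : closed Dp.
Proof.
have -> : Dp = [set g : PT | g 0 = 0] `&` [set g : PT | g 1 = 1]
  `&` (\bigcap_(ab in [set: {poly B} * {poly B}]) [set g : PT | g (ab.1 - ab.2) <= g ab.1 + g ab.2])
  `&` (\bigcap_(ab in [set: {poly B} * {poly B}]) [set g : PT | g (ab.1 * ab.2) = g ab.1 * g ab.2])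
  `&` (\bigcap_(a in [set: B]) [set g : PT | g a%:P <= nrm a])
  `&` [set g : PT | g 'X <= 1].
  apply/seteqP; split => g /=.
    move=> [[[h0 h1 hs hm] hb] hX]; do !split => //.
    - by move=> [a b] _; exact: hs.
    - by move=> [a b] _; exact: hm.
    - by move=> a _; exact: hb.
  move=> [[[[[h0 h1] hs] hm] hb] hX]; do !split => //.
  - by move=> a b; exact: (hs (a, b)).
  - by move=> a b; exact: (hm (a, b)).
  - by move=> a; exact: hb.
repeat apply: closedI.
- by apply: cl_eq; [exact: cpr | exact: cont_cst].
- by apply: cl_eq; [exact: cpr | exact: cont_cst].
- apply: closed_bigI => -[a b] _; apply: cl_le; first exact: cpr.
  by apply: cont_add; exact: cpr.
- apply: closed_bigI => -[a b] _; apply: cl_eq; first exact: cpr.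
  by apply: cont_mul; exact: cpr.
- by apply: closed_bigI => a _; apply: cl_le; [exact: cpr | exact: cont_cst].
- by apply: cl_le; [exact: cpr | exact: cont_cst].
Qed.

Definition cb (P : {poly B}) : R := \sum_(i < size P) nrm P`_i.

Lemma Dp_bound g : Dp g -> forall P, 0 <= g P <= cb P.
Proof.
move=> [[ms hb] hX] P; apply/andP; split; first exact: ms_ge0.
rewrite -{1}(coefK P) poly_def; apply: le_trans (ms_sum ms _ _) _.
apply: ler_sum => i _; case: (ms) => _ _ _ hm.
rewrite -mul_polyC hm (ms_X ms) -[nrm _]mulr1.
apply: ler_pM; [exact: ms_ge0 | by rewrite exprn_ge0 // ms_ge0 | exact: hb |].
by rewrite exprn_ile1 // ms_ge0.
Qed.

Lemma Dp_compact : compact Dp.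
Proof.
have K := (@tychonoff _ (fun _ : {poly B} => R) (fun P => `[0, cb P]%classic) (fun P => @segment_compact R 0 (cb P))).
refine (@subclosed_compact PT Dp [set g : PT | forall P, `[0, cb P]%classic (g P)] Dp_closed _ _).
  exact K.
by move=> g Dg P; rewrite /= in_itv /=; exact: Dp_bound.
Qed.
End Comp.

Section Comp2.
Context {R : realType} {B : comNzRingType} (nrm : B -> R).

Definition Dx := [set x : A1 nrm | val x 'X <= 1].

Lemma Dx_compact : compact Dx.
Proof.
move=> F PF FD.
have PG := fmap_proper_filter (@set_val _ (A1set nrm)) PF.
have GD : (set_val @ F) (Dp nrm).
  have : F ((@set_val _ (A1set nrm)) @^-1` (Dp nrm)).
    apply: filterS FD => x /= hx; split => //.
    by have /set_mem := valP x.
  exact.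
have [p [[Ap pX] clp]] := Dp_compact PG GD.
pose y : A1 nrm := @exist _ (fun g => g \in A1set nrm) p (mem_set Ap).
exists y; split => //.
move=> A Bs FA; rewrite nbhsE => -[C [[W oW <-] Wy] CB].
have GA : (set_val @ F) (set_val @` A).
  have : F ((@set_val _ (A1set nrm)) @^-1` (set_val @` A)) by apply: filterS FA => a Aa; exists a.
  exact.
have nW : nbhs p W by apply: open_nbhs_nbhs; split.
have [v [[a Aa <-] Wa]] := clp _ _ GA nW.
by exists a; split => //; apply: CB.
Qed.

Lemma P1_compact : compact [set: P1 nrm].
Proof.
pose C : set (Charts nrm) :=
  existT (A1fam nrm) true @` Dx `|` existT (A1fam nrm) false @` Dx.
have cC : compact C.
  apply: compactU; apply: continuous_compact; try exact: Dx_compact;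
  apply: continuous_subspaceT; [exact (@existT_continuous bool (A1fam nrm) true) | exact (@existT_continuous bool (A1fam nrm) false)].
have cP : compact ((\pi_(P1 nrm))%qT @` C).
  apply: continuous_compact => //; apply: continuous_subspaceT; exact pi_continuous.
apply: (subclosed_compact closedT cP) => p _.
rewrite -(reprK p); case: (repr p) => i x.
have [hx|hx] := leP (val x 'X) 1.
  by exists (existT _ i x) => //; case: i x hx => x hx; [left|right]; exists x.
have hz : val x 'X != 0 by apply: lt0r_neq0; apply: lt_trans hx.
exists (existT (A1fam nrm) (~~ i) (dual_pt hz)).
  have hy : Dx (dual_pt hz) by rewrite /Dx /= (dualX (z_ms x) hz) invf_le1 ?ltW //; apply: lt_trans hx.
  by case: i x hx hz hy => x hx hz hy; [right|left]; exists (dual_pt hz).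
have : (existT (A1fam nrm) (~~ i) (dual_pt hz) = existT (A1fam nrm) i x
          %[mod {eq_quot (@glue_relb R B nrm)}])%qT.
  apply/eqmodP; apply/asboolP; case: i x hx hz => x hx hz /=.
  - exact: glue_dual_r.
  - exact: glue_dual_l.
exact.
Qed.
End Comp2.

Section Gen.
Context {R : realType} {X : topologicalType}.

Definition mk (f : X -> R) (hf : continuous f) : C0 R X := exist _ f hf.

Lemma cst_cont (c : R) : continuous (fun _ : X => c).
Proof. by move=> t; exact: cvg_cst. Qed.

Definition cst0 (c : R) : C0 R X := mk (@cst_cont c).

Variable m : C0 R X -> R.
Hypothesis hm : positive_radon m.

Lemma m_zero (z : C0 R X) : (forall x, sval z x = 0) -> m z = 0.
Proof.
move=> hz; have : forall x, sval z x = 1 * sval z x + sval z x by move=> x; rewrite hz mul1r addr0.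
move/(hm.1 1 z z z); rewrite mul1r => h; lra.
Qed.

Lemma m_lin a (f g h : C0 R X) : (forall x, sval h x = a * sval f x + sval g x) -> m h = a * m f + m g.
Proof. exact: hm.1. Qed.

Lemma m_pos (f : C0 R X) : (forall x, 0 <= sval f x) -> 0 <= m f.
Proof. exact: hm.2. Qed.

Lemma clamp_spec (e t : R) : 0 < e ->
  `|Num.max (-e) (Num.min e t)| <= e /\ (`|t| < e -> Num.max (-e) (Num.min e t) = t).
Proof.
move=> he; rewrite /Order.max /Order.min.
case: (ltP e t) => h1; case: ifP => h2 //; rewrite ?ler_norml ?ltr_norml; split;
  try (apply/andP; split; lra); try (move/andP => [? ?]; lra); try (move=> *; lra).
Qed.

Lemma supp_zero (F : set X) (g : C0 R X) : supported_on m F ->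
  (forall x, F x -> sval g x = 0) -> m g = 0.
Proof.
move=> hs hF.
pose one := cst0 1.
have M0 : 0 <= m one by apply: m_pos => x /=.
suff H : forall e, 0 < e -> `|m g| <= e * m one.
  apply/eqP; rewrite -normr_eq0 eq_le normr_ge0 andbT; apply/ler_addgt0Pr => e he.
  rewrite add0r; apply: le_trans (H (e / (m one + 1)) _) _.
    by rewrite divr_gt0 //; lra.
  rewrite mulrAC ler_pdivrMr; last by lra.
  by rewrite ler_pM2l //; lra.
move=> e he.
have rc : continuous ((fun _ : X => - e) \max ((fun _ : X => e) \min (sval g))).
  apply: max_fun_continuous; first exact: cst_cont.
  by apply: min_fun_continuous; [exact: cst_cont | exact: (svalP g)].
pose r := mk rc.
have qc : continuous (fun x => sval g x - sval r x).
  move=> x; apply: (continuousD (svalP g x)); apply: continuousN; exact: rc.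
pose q := mk qc.
have mg : m g = 1 * m q + m r by apply: m_lin => x /=; rewrite mul1r subrK.
have mq : m q = 0.
  apply: hs.
  have sub : [set x | sval q x != 0] `<=` [set x | e <= `|sval g x|].
    move=> x /= hq; rewrite leNgt; apply/negP => hlt; move: hq.
    by rewrite /= (proj2 (clamp_spec (sval g x) he) hlt) subrr eqxx.
  have cl : closed [set x | e <= `|sval g x|].
    apply: cl_le; first exact: cst_cont.
    by move=> x; apply: continuous_comp; [exact: (svalP g) | exact: norm_continuous].
  apply/seteqP; split => [x [hx Fx]|//].
  have := (closure_subset sub) x hx; rewrite -((closure_id _).1 cl) /= (hF x Fx) normr0.
  lra.
pose eo := cst0 e.
have meo : m eo = e * m one.
  rewrite (@m_lin e one (cst0 0) eo) ?(@m_zero (cst0 0)) ?addr0 //= => x; lra.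
have hb x : `|sval r x| <= e by exact ((clamp_spec (sval g x) he).1).
have p1 : 0 <= -1 * m r + m eo.
  have hc : continuous (fun x => -1 * sval r x + sval eo x).
    by apply: cont_add; [apply: cont_mul; [exact: cst_cont | exact rc] | exact: cst_cont].
  rewrite -(@m_lin (-1) r eo (mk hc)) //; apply: m_pos => x.
  have := hb x; rewrite ler_norml => /andP[? ?]; change (0 <= -1 * sval r x + e); lra.
have p2 : 0 <= 1 * m r + m eo.
  have hc : continuous (fun x => 1 * sval r x + sval eo x).
    by apply: cont_add; [apply: cont_mul; [exact: cst_cont | exact rc] | exact: cst_cont].
  rewrite -(@m_lin 1 r eo (mk hc)) //; apply: m_pos => x.
  have := hb x; rewrite ler_norml => /andP[? ?]; change (0 <= 1 * sval r x + e); lra.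
rewrite mg mq meo in p1 p2 *; rewrite mul1r add0r ler_norml; apply/andP; split; lra.
Qed.
End Gen.

Section Final.
Context {R : realType} {B : comNzRingType} (nrm : B -> R).

Lemma part1 (mu : MB nrm -> C0 R (P1 nrm) -> R) : FB mu -> Mplus (Lmu mu).
Proof.
move=> [hmu hc]; split.
- exact: hc.
- move=> a f g h hh; apply: funext => b; exact: ((hmu b).1.1 a f g h hh).
- move=> f hf b; exact: ((hmu b).1.2 f hf).
- move=> psi h one hh hone; apply: funext => b; rewrite /Lmu.
  have [hr hs] := hmu b.
  have gc : continuous (fun p => sval h p - sval psi b * sval one p).
    move=> p; apply: (continuousD (svalP h p)); apply: continuousN.
    exact: (continuousM (cvg_cst _) (svalP one p)).
  have := @m_lin _ _ _ hr (sval psi b) one (mk gc) h.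
  rewrite (@supp_zero _ _ _ hr _ (mk gc) hs) ?addr0.
    by apply => p /=; rewrite subrKC.
  by move=> p /= hp; rewrite hh hone hp mulr1 subrr.
Qed.

Lemma part2 (mu nu : MB nrm -> C0 R (P1 nrm) -> R) : Lmu mu = Lmu nu -> mu = nu.
Proof.
move=> e; apply: funext => b; apply: funext => phi.
exact: (congr1 (fun L => L phi b) e).
Qed.

Lemma part3_supp (L : C0 R (P1 nrm) -> MB nrm -> R) (hL : Mplus L) (b : MB nrm)
  (f : C0 R (P1 nrm)) :
  closure [set p | sval f p != 0] `&` fiber b = set0 -> L f b = 0.
Proof.
case: hL => cL linL posL constL hK.
set K := closure [set p | sval f p != 0] in hK.
have cK : compact K := subclosed_compact (@closed_closure (P1 nrm) [set p | sval f p != 0]) (@P1_compact R B nrm) (@subsetT _ _).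
have cpK : compact ((@Defs.proj1 R B nrm) @` K).
  exact: (continuous_compact (continuous_subspaceT (@proj1_cont R B nrm)) cK).
have clK : closed ((@Defs.proj1 R B nrm) @` K) := compact_closed (@MB_hausdorff R B nrm) cpK.
have nb : ~ ((@Defs.proj1 R B nrm) @` K) b.
  move=> [p Kp pb]; have : (K `&` fiber b) p by split.
  by rewrite hK.
have sep := @point_uniform_separator R _ b _ clK nb.
pose U := @Urysohn (MB nrm) R [set b] ((@Defs.proj1 R B nrm) @` K).
have Ub : U b = 0.
  by have := @Urysohn_sub0 (MB nrm) R _ _ sep (U b); apply; exists b.
have U1 p : K p -> U (Defs.proj1 p) = 1.
  move=> Kp; have := @Urysohn_sub1 (MB nrm) R _ _ sep (U (Defs.proj1 p)); apply.
  by exists (Defs.proj1 p) => //; exists p.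
have U0 c : 0 <= U c.
  have := @Urysohn_range (MB nrm) R [set b] ((@Defs.proj1 R B nrm) @` K) (U c).
  by move=> /(_ (ex_intro2 _ _ c I erefl)); rewrite /= in_itv /= => /andP[].
have := compact_bounded (continuous_compact (continuous_subspaceT (svalP f)) (@P1_compact R B nrm)).
case=> M0 [_ HM].
pose M := `|M0| + 1.
have ltM : M0 < M by rewrite /M; have := ler_norm M0; lra.
have M0le : 0 <= M by rewrite /M; have := normr_ge0 M0; lra.
have fM p : `|sval f p| <= M.
  by have := HM M ltM (sval f p); apply; exists p.
have Hc : continuous (fun p => M * U (Defs.proj1 p)).
  apply: cont_mul; first exact: cst_cont.
  move=> p; apply: continuous_comp; first exact: proj1_cont.
  exact: Urysohn_continuous.
have psic : continuous (fun c => M * U c).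
  by apply: cont_mul; [exact: cst_cont | exact: Urysohn_continuous].
pose H := mk Hc.
have LHb : L H b = 0.
  by rewrite (constL (mk psic) H (cst0 1)) //= Ub mulr0 mul0r.
have hfH p : `|sval f p| <= sval H p.
  rewrite /H /=; have [->|nz] := eqVneq (sval f p) 0.
    by rewrite normr0 mulr_ge0.
  rewrite U1 ?mulr1 //; apply: subset_closure; exact: nz.
have g1c : continuous (fun p => -1 * sval f p + sval H p).
  by apply: cont_add; [apply: cont_mul; [exact: cst_cont | exact: (svalP f)] | exact Hc].
have g2c : continuous (fun p => 1 * sval f p + sval H p).
  by apply: cont_add; [apply: cont_mul; [exact: cst_cont | exact: (svalP f)] | exact Hc].
have p1 := posL (mk g1c) _ b.
have p2 := posL (mk g2c) _ b.
rewrite (linL (-1) f H (mk g1c)) // LHb in p1.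
rewrite (linL 1 f H (mk g2c)) // LHb in p2.
have q1 : 0 <= -1 * L f b + 0.
  apply: p1 => p; have := hfH p; rewrite ler_norml => /andP[? ?].
  change (0 <= -1 * sval f p + sval H p); lra.
have q2 : 0 <= 1 * L f b + 0.
  apply: p2 => p; have := hfH p; rewrite ler_norml => /andP[? ?].
  change (0 <= 1 * sval f p + sval H p); lra.
lra.
Qed.

Lemma part3 (L : C0 R (P1 nrm) -> MB nrm -> R) : Mplus L -> exists mu, FB mu /\ Lmu mu = L.
Proof.
move=> hL; exists (fun b phi => L phi b); split; last by [].
have [cL linL posL constL] := hL.
split; last exact: cL.
move=> b; split; first split.
- by move=> a f g h hh; rewrite (linL a f g h hh).
- by move=> f hf; exact: posL.
- by move=> f hf; exact: part3_supp.
Qed.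
End Final.

Unset Implicit Arguments.
Theorem mainTheorem12 (R : realType) (B : comNzRingType) (nrm : B -> R)
  (hB : banach_ring nrm) :
  (forall mu : MB nrm -> C0 R (P1 nrm) -> R, FB mu -> Mplus (Lmu mu)) /\
  (forall mu nu : MB nrm -> C0 R (P1 nrm) -> R,
      FB mu -> FB nu -> Lmu mu = Lmu nu -> mu = nu) /\
  (forall L : C0 R (P1 nrm) -> MB nrm -> R,
      Mplus L -> exists mu, FB mu /\ Lmu mu = L).
Proof.
split; first by move=> mu; exact: part1.
split; first by move=> mu nu _ _; exact: part2.
by move=> L; exact: part3.
Qed.
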